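(* Let $M=(E,r)$ be a matroid with $|E|\ge 2$ and let $e\in E$. Then (i) if $e$ is neither a loop nor a coloop, $Q'_M(x,y)=x\,Q'_{M\setminus e}(x,y)+y\,Q'_{M/e}(x,y)$; (ii) if $e$ is a loop or a coloop, $Q'_M(x,y)=(x+y-1)\,Q'_{M/e}(x,y)=(x+y-1)\,Q'_{M\setminus e}(x,y)$.
   Context: $M\setminus e$ and $M/e$ denote the usual matroid deletion and contraction (matroids on $E\setminus\{e\}$). For a polymatroid (in particular a matroid) $N$ on a nonempty ground set $F$, with base polytope $P(N)\subseteq\mathbb R^F$ (for a matroid, the convex hull of indicator vectors of bases), let $\Delta_F=\operatorname{conv}\{\mathbf e_i:i\in F\}$, $\nabla_F=-\Delta_F$, and $Q_N(t,u)=\#\big((P(N)+u\Delta_F+t\nabla_F)\cap\mathbb Z^F\big)$ for integers $t,u\ge0$. This is a polynomial; write $Q_N(t,u)=\sum_{i,j}c_{ij}\binom{u}{j}\binom{t}{i}$ and define $Q'_N(x,y)=\sum_{i,j}c_{ij}(x-1)^i(y-1)^j$. *)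

(* Defs.v *)
From HB Require Import structures.
From mathcomp Require Import all_boot all_order all_algebra.
Set Implicit Arguments. Unset Strict Implicit. Unset Printing Implicit Defensive.
Import Order.TTheory GRing.Theory Num.Theory.
Local Open Scope ring_scope.

(* A matroid (F, r): ground set F : {set T} inside a finite type T, rank
   function r (only its values on subsets of F matter). Rank axioms. *)
Definition is_matroid (T : finType) (F : {set T}) (r : {set T} -> nat) : Prop :=
  [/\ forall X : {set T}, X \subset F -> (r X <= #|X|)%N,
      forall X Y : {set T}, Y \subset F -> X \subset Y -> (r X <= r Y)%N &
      forall X Y : {set T}, X \subset F -> Y \subset F ->
        (r (X :|: Y) + r (X :&: Y) <= r X + r Y)%N].

Definition bases (T : finType) (F : {set T}) (r : {set T} -> nat) : {set {set T}} :=
  [set X : {set T} | [&& X \subset F, #|X| == r X & r X == r F]].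

(* Deletion M \ e has ground set F :\ e and the same rank function;
   contraction M / e has ground set F :\ e and rank X |-> r(X ∪ e) - r({e}). *)
Definition contr_rank (T : finType) (r : {set T} -> nat) (e : T) : {set T} -> nat :=
  fun X => (r (e |: X) - r [set e])%N.

Definition is_loop (T : finType) (r : {set T} -> nat) (e : T) : Prop := r [set e] = 0%N.
Definition is_coloop (T : finType) (F : {set T}) (r : {set T} -> nat) (e : T) : Prop :=
  (r (F :\ e) < r F)%N.

(* Integer point z of R^F (encoded as a function T -> int vanishing off F)
   lying in P(N) + u Δ_F + t ∇_F, where P(N) = conv{1_B : B basis},
   Δ_F = conv{e_i : i ∈ F}, ∇_F = -Δ_F; all convex hulls written out as
   sets of convex combinations, with real coefficients in R. *)
Definition in_QP (R : realFieldType) (T : finType) (F : {set T})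
    (Bs : {set {set T}}) (t u : nat) (z : {ffun T -> int}) : Prop :=
  (forall i : T, i \notin F -> z i = 0) /\
  exists (lam : {set T} -> R) (mu nu : T -> R),
    [/\ (forall X : {set T}, 0 <= lam X) /\ \sum_(X in Bs) lam X = 1,
        (forall i : T, 0 <= mu i) /\ \sum_(i in F) mu i = 1,
        (forall i : T, 0 <= nu i) /\ \sum_(i in F) nu i = 1 &
        forall i : T, i \in F ->
          (z i)%:~R = \sum_(X in Bs) lam X * (i \in X)%:R
                      + u%:R * mu i - t%:R * nu i].

Definition card_is (A : eqType) (P : A -> Prop) (n : nat) : Prop :=
  exists s : seq A, [/\ uniq s, forall z, z \in s <-> P z & size s = n].

Definition Q_expansion (R : realFieldType) (T : finType) (F : {set T})
    (r : {set T} -> nat) (d : nat) (c : nat -> nat -> rat) : Prop :=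
  forall t u : nat, exists n : nat,
    card_is (in_QP R F (bases F r) t u) n /\
    n%:R = \sum_(i < d) \sum_(j < d) c i j * ('C(u, j))%:R * ('C(t, i))%:R.

(* Q'_N(x,y) = sum c_ij (x-1)^i (y-1)^j as an element of {poly {poly rat}}:
   the outer variable 'X is x, the inner variable 'X%:P is y. *)
Definition Qprime (d : nat) (c : nat -> nat -> rat) : {poly {poly rat}} :=
  \sum_(i < d) \sum_(j < d)
     (c i j)%:P%:P * ('X - 1) ^+ i * (('X - 1) ^+ j)%:P.

Definition varx : {poly {poly rat}} := 'X.
Definition vary : {poly {poly rat}} := ('X)%:P.

(* Main.v *)
Require Import Defs.
From HB Require Import structures.
From mathcomp Require Import all_boot all_order all_algebra.
From mathcomp Require Import ring lra zify.
Set Implicit Arguments. Unset Strict Implicit. Unset Printing Implicit Defensive.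
Import Order.TTheory GRing.Theory Num.Theory.
Local Open Scope ring_scope.
Lemma sum_widen (V : zmodType) (G : nat -> V) d D : (d <= D)%N ->
  (forall i, (d <= i)%N -> G i = 0) -> \sum_(i < D) G i = \sum_(i < d) G i.
Proof.
move=> dD G0; rewrite -(big_mkord xpredT) -(big_mkord xpredT G).
rewrite (big_cat_nat (leq0n d) dD) /=.
rewrite [X in _ + X]big1_seq ?addr0 // => i /andP[_]; rewrite mem_index_iota => /andP[di _]; exact: G0.
Qed.

Lemma hockey_nat t i : (\sum_(s < t.+1) 'C(s, i) = 'C(t.+1, i.+1))%N.
Proof.
elim: t => [|t IH]; first by rewrite big_ord_recr big_ord0 /= binS bin0n add0n.
by rewrite big_ord_recr /= IH [in RHS]binS.
Qed.

Lemma hockey t i : \sum_(s < t.+1) ('C(s, i))%:R = ('C(t.+1, i.+1))%:R :> rat.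
Proof. by rewrite -natr_sum hockey_nat. Qed.

Definition pv (V : zmodType) (g : nat -> V) (i : nat) : V := if i is i'.+1 then g i' else 0.

Lemma shift_sum (V : comPzRingType) (g phi : nat -> V) d : g d = 0 ->
  \sum_(i < d.+1) (pv g i + g i) * phi i =
  \sum_(i < d) g i * (phi i.+1 + phi i).
Proof.
move=> gd; under eq_bigr do rewrite mulrDl.
rewrite big_split /= big_ord_recl /= mul0r add0r big_ord_recr /= gd mul0r addr0.
by rewrite -big_split /=; apply: eq_bigr => i _; rewrite mulrDr.
Qed.

Definition Ev (d : nat) (c : nat -> nat -> rat) (t u : nat) : rat :=
  \sum_(i < d) \sum_(j < d) c i j * ('C(u, j))%:R * ('C(t, i))%:R.

Definition bnd (d : nat) (c : nat -> nat -> rat) :=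
  forall i j, (d <= i)%N || (d <= j)%N -> c i j = 0.

Definition trunc (d : nat) (c : nat -> nat -> rat) : nat -> nat -> rat :=
  fun i j => if (i < d)%N && (j < d)%N then c i j else 0.

Definition Yp (j : nat) : {poly {poly rat}} := (('X - 1) ^+ j)%:P.

Lemma Ev_nf d c t u : Ev d c t u =
  \sum_(i < d) (\sum_(j < d) c i j * ('C(u, j))%:R) * ('C(t, i))%:R.
Proof. by apply: eq_bigr => i _; rewrite mulr_suml. Qed.

Lemma Qp_nf d c : Qprime d c =
  \sum_(i < d) (\sum_(j < d) (c i j)%:P%:P * Yp j) * ('X - 1) ^+ i.
Proof.
apply: eq_bigr => i _; rewrite mulr_suml; apply: eq_bigr => j _.
by rewrite /Yp mulrAC.
Qed.

Lemma Ev_widen d D c t u : bnd d c -> (d <= D)%N -> Ev D c t u = Ev d c t u.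
Proof.
move=> bc dD; rewrite !Ev_nf.
have inner i : \sum_(j < D) c i j * ('C(u, j))%:R = \sum_(j < d) c i j * ('C(u, j))%:R.
  by apply: (@sum_widen _ (fun j => c i j * ('C(u, j))%:R)) => // j dj; rewrite bc ?dj ?orbT // mul0r.
under eq_bigr => i _ do rewrite inner.
apply: (@sum_widen _ (fun i => (\sum_(j < d) c i j * ('C(u, j))%:R) * ('C(t, i))%:R)) => // i di.
by rewrite big1 ?mul0r // => j _; rewrite bc ?di // mul0r.
Qed.

Lemma Qp_widen d D c : bnd d c -> (d <= D)%N -> Qprime D c = Qprime d c.
Proof.
move=> bc dD; rewrite !Qp_nf.
have inner i : \sum_(j < D) (c i j)%:P%:P * Yp j = \sum_(j < d) (c i j)%:P%:P * Yp j.
  by apply: (@sum_widen _ (fun j => (c i j)%:P%:P * Yp j)) => // j dj; rewrite bc ?dj ?orbT // mul0r.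
under eq_bigr => i _ do rewrite inner.
apply: (@sum_widen _ (fun i => (\sum_(j < d) (c i j)%:P%:P * Yp j) * ('X - 1) ^+ i)) => // i di.
by rewrite big1 ?mul0r // => j _; rewrite bc ?di // mul0r.
Qed.

Lemma bnd_trunc d c : bnd d (trunc d c).
Proof. by move=> i j /orP[] H; rewrite /trunc ifF //; apply/negbTE; rewrite negb_and -!leqNgt H ?orbT. Qed.

Lemma Ev_trunc d c t u : Ev d (trunc d c) t u = Ev d c t u.
Proof. by apply: eq_bigr => i _; apply: eq_bigr => j _; rewrite /trunc !ltn_ord. Qed.

Lemma Qp_trunc d c : Qprime d (trunc d c) = Qprime d c.
Proof. by apply: eq_bigr => i _; apply: eq_bigr => j _; rewrite /trunc !ltn_ord. Qed.

Definition cadd (c1 c2 : nat -> nat -> rat) : nat -> nat -> rat := fun i j => c1 i j + c2 i j.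
Definition copp (c : nat -> nat -> rat) : nat -> nat -> rat := fun i j => - c i j.

Lemma Ev_add d c1 c2 t u : Ev d (cadd c1 c2) t u = Ev d c1 t u + Ev d c2 t u.
Proof.
rewrite /Ev -big_split; apply: eq_bigr => i _; rewrite -big_split; apply: eq_bigr => j _.
by rewrite /cadd !mulrDl.
Qed.

Lemma Ev_opp d c t u : Ev d (copp c) t u = - Ev d c t u.
Proof.
rewrite /Ev -sumrN; apply: eq_bigr => i _; rewrite -sumrN; apply: eq_bigr => j _.
by rewrite /copp !mulNr.
Qed.

Lemma Qp_add d c1 c2 : Qprime d (cadd c1 c2) = Qprime d c1 + Qprime d c2.
Proof.
rewrite /Qprime -big_split; apply: eq_bigr => i _; rewrite -big_split; apply: eq_bigr => j _.
by rewrite /cadd !rmorphD /= !mulrDl.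
Qed.

Lemma Qp_opp d c : Qprime d (copp c) = - Qprime d c.
Proof.
rewrite /Qprime -sumrN; apply: eq_bigr => i _; rewrite -sumrN; apply: eq_bigr => j _.
by rewrite /copp !rmorphN /= !mulNr.
Qed.

Lemma bnd_add d c1 c2 : bnd d c1 -> bnd d c2 -> bnd d (cadd c1 c2).
Proof. by move=> b1 b2 i j H; rewrite /cadd b1 // b2 // addr0. Qed.

Lemma bnd_opp d c : bnd d c -> bnd d (copp c).
Proof. by move=> b i j H; rewrite /copp b // oppr0. Qed.

Lemma bnd_widen d D c : bnd d c -> (d <= D)%N -> bnd D c.
Proof.
move=> b dD i j /orP[] H; apply: b; apply/orP; [left|right]; exact: leq_trans dD H.
Qed.

Lemma uniq1 D (g : nat -> rat) :
  (forall t, \sum_(i < D) g i * ('C(t, i))%:R = 0) -> forall i, (i < D)%N -> g i = 0.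
Proof.
move=> H.
suff: forall k i, (i < k)%N -> (i < D)%N -> g i = 0 by move=> S i iD; exact: (S i.+1).
elim=> [//|k IH] i; rewrite ltnS leq_eqVlt => /orP[/eqP -> kD|ik iD]; last exact: IH.
have := H k; rewrite (bigD1 (Ordinal kD)) //= binn mulr1 big1 ?addr0 // => j jk.
have jk' : nat_of_ord j != k.
  by apply: contra jk => /eqP jk2; apply/eqP; apply: val_inj.
case: (ltngtP j k) => [jlt|jgt|jeq]; last by rewrite jeq eqxx in jk'.
  by rewrite IH // mul0r.
by rewrite bin_small // mulr0.
Qed.

Lemma uniq2 D h : (forall t u, Ev D h t u = 0) ->
  forall i j, (i < D)%N -> (j < D)%N -> h i j = 0.
Proof.
move=> H i j iD jD.
have Hi u : \sum_(j < D) h i j * ('C(u, j))%:R = 0.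
  by apply: (@uniq1 D (fun i => \sum_(j < D) h i j * ('C(u, j))%:R)) => // t; rewrite -Ev_nf.
exact: (@uniq1 D (h i)).
Qed.

Lemma rep_unique d c d' c' : bnd d c -> bnd d' c' ->
  (forall t u, Ev d c t u = Ev d' c' t u) -> Qprime d c = Qprime d' c'.
Proof.
move=> b b' H.
rewrite -(@Qp_widen d (maxn d d')) ?leq_maxl // -(@Qp_widen d' (maxn d d') c') ?leq_maxr //.
have E : forall i j, (i < maxn d d')%N -> (j < maxn d d')%N -> cadd c (copp c') i j = 0.
  apply: uniq2 => t u.
  by rewrite Ev_add Ev_opp (@Ev_widen d _ c) ?leq_maxl // (@Ev_widen d' _ c') ?leq_maxr // H subrr.
apply: eq_bigr => i _; apply: eq_bigr => j _.
by have := E i j (ltn_ord i) (ltn_ord j); rewrite /cadd /copp => /eqP; rewrite subr_eq0 => /eqP ->.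
Qed.

Definition cx (c : nat -> nat -> rat) : nat -> nat -> rat :=
  fun i j => pv (fun i' => c i' j) i + c i j.
Definition cy (c : nat -> nat -> rat) : nat -> nat -> rat :=
  fun i j => pv (c i) j + c i j.

Lemma bnd_cx d c : bnd d c -> bnd d.+1 (cx c).
Proof.
move=> b i j H; rewrite /cx /pv; case: i H => [|i] H; rewrite !b ?addr0 //; move: H; lia.
Qed.

Lemma bnd_cy d c : bnd d c -> bnd d.+1 (cy c).
Proof.
move=> b i j H; rewrite /cy /pv; case: j H => [|j] H; rewrite !b ?addr0 //; move: H; lia.
Qed.

Lemma binS_r t i : ('C(t, i.+1))%:R + ('C(t, i))%:R = ('C(t.+1, i.+1))%:R :> rat.
Proof. by rewrite binS natrD. Qed.

Lemma Ev_cx d c t u : bnd d c ->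
  Ev d.+1 (cx c) t u = \sum_(s < t.+1) Ev d c s u.
Proof.
move=> b; rewrite Ev_nf.
pose G i := \sum_(j < d.+1) c i j * ('C(u, j))%:R.
have inner i : \sum_(j < d.+1) cx c i j * ('C(u, j))%:R = pv G i + G i.
  rewrite /cx; under eq_bigr do rewrite mulrDl; rewrite big_split /=; congr (_ + _).
  by case: i => [|i] /=; [rewrite big1 // => j _; rewrite mul0r|].
under eq_bigr do rewrite inner.
rewrite (@shift_sum _ G (fun i => ('C(t, i))%:R)); last by rewrite /G big1 // => j _; rewrite b ?leqnn // mul0r.
under eq_bigr do rewrite binS_r -hockey mulr_sumr.
rewrite exchange_big /=; apply: eq_bigr => s _; rewrite Ev_nf; apply: eq_bigr => i _.
congr (_ * _); rewrite /G (@sum_widen _ (fun j => c i j * ('C(u, j))%:R) d) //.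
by move=> j dj; rewrite b ?dj ?orbT // mul0r.
Qed.

Lemma Ev_cy d c t u : bnd d c ->
  Ev d.+1 (cy c) t u = \sum_(v < u.+1) Ev d c t v.
Proof.
move=> b; rewrite Ev_nf.
pose K v i := \sum_(j < d) c i j * ('C(v, j))%:R.
have inner i : \sum_(j < d.+1) cy c i j * ('C(u, j))%:R = \sum_(v < u.+1) K v i.
  rewrite /cy (@shift_sum _ (c i) (fun j => ('C(u, j))%:R)); last by rewrite b // leqnn orbT.
  under eq_bigr do rewrite binS_r -hockey mulr_sumr.
  by rewrite exchange_big.
under eq_bigr do rewrite inner.
rewrite (@sum_widen _ (fun i => (\sum_(v < u.+1) K v i) * ('C(t, i))%:R) d) //; last first.
  by move=> i di; rewrite big1 ?mul0r // => v _; rewrite /K big1 // => j _; rewrite b ?di // mul0r.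
under eq_bigr do rewrite mulr_suml.
rewrite exchange_big /=; apply: eq_bigr => v _; rewrite Ev_nf //.
Qed.

Lemma pvC (g : nat -> rat) j : ((pv g j)%:P)%:P = pv (fun j => ((g j)%:P)%:P) j :> {poly {poly rat}}.
Proof. by case: j => [|j] //=; rewrite !rmorph0. Qed.

Lemma Qp_cx d c : bnd d c -> Qprime d.+1 (cx c) = varx * Qprime d c.
Proof.
move=> b; rewrite !Qp_nf.
pose G i := \sum_(j < d.+1) (c i j)%:P%:P * Yp j.
have inner i : \sum_(j < d.+1) (cx c i j)%:P%:P * Yp j = pv G i + G i.
  rewrite /cx; under eq_bigr do rewrite rmorphD /= rmorphD /= mulrDl.
  rewrite big_split /=; congr (_ + _).
  by case: i => [|i] /=; [rewrite big1 // => j _; rewrite !rmorph0 mul0r|].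
under eq_bigr do rewrite inner.
rewrite (@shift_sum _ G (fun i => ('X - 1) ^+ i)); last by rewrite /G big1 // => j _; rewrite b ?leqnn // !rmorph0 mul0r.
rewrite mulr_sumr; apply: eq_bigr => i _.
rewrite /G (@sum_widen _ (fun j => (c i j)%:P%:P * Yp j) d) //; last first.
  by move=> j dj; rewrite b ?dj ?orbT // !rmorph0 mul0r.
rewrite /varx exprS; ring.
Qed.

Lemma Qp_cy d c : bnd d c -> Qprime d.+1 (cy c) = vary * Qprime d c.
Proof.
move=> b; rewrite !Qp_nf.
pose K i := \sum_(j < d) (c i j)%:P%:P * Yp j.
have inner i : \sum_(j < d.+1) (cy c i j)%:P%:P * Yp j = K i * vary.
  rewrite /cy; under eq_bigr do rewrite rmorphD /= rmorphD /= pvC.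
  rewrite (@shift_sum _ (fun j => (c i j)%:P%:P) Yp); last by rewrite b // leqnn orbT.
  rewrite mulr_suml; apply: eq_bigr => j _.
  by rewrite /Yp /vary exprS -mulrA -polyCD -!polyCM; apply: congr1; ring.
under eq_bigr do rewrite inner.
rewrite (@sum_widen _ (fun i => (K i * vary) * ('X - 1) ^+ i) d) //; last first.
  by move=> i di; rewrite /K big1 ?mul0r // => j _; rewrite b ?di // !rmorph0 mul0r.
rewrite mulr_sumr; apply: eq_bigr => i _; rewrite /K; ring.
Qed.

Lemma final_alg (NM ND NC NE : nat -> nat -> rat) dM cM dD cD dC cC dE cE :
  (forall t u, NM t u = Ev dM cM t u) ->
  (forall t u, ND t u = Ev dD cD t u) ->
  (forall t u, NC t u = Ev dC cC t u) ->
  (forall t u, NE t u = Ev dE cE t u) ->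
  (forall t u, NM t u = \sum_(s < t.+1) ND s u + \sum_(v < u.+1) NC t v - NE t u) ->
  Qprime dM cM = varx * Qprime dD cD + vary * Qprime dC cC - Qprime dE cE.
Proof.
move=> HM HD HC HE H.
pose D := maxn (maxn dD dC) dE.
have lD : (dD <= D)%N by rewrite /D; lia.
have lC : (dC <= D)%N by rewrite /D; lia.
have lE : (dE <= D)%N by rewrite /D; lia.
pose cD' := trunc dD cD; pose cC' := trunc dC cC; pose cE' := trunc dE cE.
have bD : bnd D cD' by exact: (bnd_widen (@bnd_trunc dD cD) lD).
have bC : bnd D cC' by exact: (bnd_widen (@bnd_trunc dC cC) lC).
have bE : bnd D cE' by exact: (bnd_widen (@bnd_trunc dE cE) lE).
have ED t u : ND t u = Ev D cD' t u by rewrite HD (@Ev_widen dD D cD' t u (@bnd_trunc dD cD) lD) Ev_trunc.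
have EC t u : NC t u = Ev D cC' t u by rewrite HC (@Ev_widen dC D cC' t u (@bnd_trunc dC cC) lC) Ev_trunc.
have EE t u : NE t u = Ev D cE' t u by rewrite HE (@Ev_widen dE D cE' t u (@bnd_trunc dE cE) lE) Ev_trunc.
rewrite -Qp_trunc -(Qp_trunc dD) -(Qp_trunc dC) -(Qp_trunc dE).
rewrite -(Qp_widen (@bnd_trunc dD cD) lD) -(Qp_widen (@bnd_trunc dC cC) lC) -(Qp_widen (@bnd_trunc dE cE) lE).
have bE1 : bnd D.+1 cE' by exact: (bnd_widen bE (leqnSn D)).
rewrite -(Qp_widen bE (leqnSn D)) -(Qp_cx bD) -(Qp_cy bC) -Qp_add -Qp_opp -Qp_add.
apply: rep_unique; first exact: bnd_trunc.
  by apply: bnd_add; [apply: bnd_add; [apply: bnd_cx|apply: bnd_cy]|apply: bnd_opp].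
move=> t u; rewrite Ev_trunc -HM H (Ev_add _ (cadd (cx cD') (cy cC')) (copp cE')) (Ev_add _ (cx cD') (cy cC')) Ev_opp Ev_cx // Ev_cy // (@Ev_widen D D.+1 cE') //.
congr (_ + _ + _); [apply: eq_bigr => s _; exact: ED|apply: eq_bigr => v _; exact: EC|by rewrite EE].
Qed.

Section Matroid.
Variables (T : finType) (F : {set T}) (r : {set T} -> nat).
Hypothesis M : is_matroid F r.

Lemma r_le (X : {set T}) : X \subset F -> (r X <= #|X|)%N.
Proof. by case: M => H _ _; apply: H. Qed.
Lemma r_mono (X Y : {set T}) : Y \subset F -> X \subset Y -> (r X <= r Y)%N.
Proof. by case: M => _ H _; apply: H. Qed.
Lemma r_sub (X Y : {set T}) : X \subset F -> Y \subset F ->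
  (r (X :|: Y) + r (X :&: Y) <= r X + r Y)%N.
Proof. by case: M => _ _ H; apply: H. Qed.

Lemma r0 : r set0 = 0%N.
Proof. by apply/eqP; rewrite -leqn0 -(cards0 T) r_le ?sub0set. Qed.

Lemma indep_sub (X Y : {set T}) : Y \subset F -> X \subset Y -> r Y = #|Y| -> r X = #|X|.
Proof.
move=> YF XY rY; have XF := subset_trans XY YF.
apply/eqP; rewrite eqn_leq r_le //=.
have DF : Y :\: X \subset F by apply: subset_trans (subsetDl _ _) YF.
have U : X :|: (Y :\: X) = Y.
  by apply/setP => x; rewrite !inE; case: (boolP (x \in X)) => //= /(subsetP XY) ->.
have I : X :&: (Y :\: X) = set0.
  by apply/setP => x; rewrite !inE; case: (x \in X); rewrite ?andbF.
have := r_sub XF DF; rewrite U I r0 addn0 rY.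
have := r_le DF; rewrite cardsDS //.
have := subset_leq_card XY; lia.
Qed.

Lemma span (I Y : {set T}) : Y \subset F -> I \subset Y ->
  (forall x, x \in Y -> r (x |: I) = r I) -> r Y = r I.
Proof.
move=> YF IY H.
have IF := subset_trans IY YF.
suff S : forall n (A : {set T}), #|A| = n -> A \subset Y -> r (I :|: A) = r I.
  by rewrite -(S _ Y erefl (subxx _)) (setUidPr IY).
elim=> [|n IHn] A.
  by move/eqP; rewrite cards_eq0 => /eqP -> _; rewrite setU0.
case: (set_0Vmem A) => [-> |[x xA]]; first by rewrite cards0.
move=> cA AY.
have cA' : #|A :\ x| = n by move: cA; rewrite (cardsD1 x A) xA add1n => -[].
have A'Y : A :\ x \subset Y by apply: subset_trans (subsetDl _ _) AY.
have xY : x \in Y by apply: (subsetP AY).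
have IH := IHn _ cA' A'Y.
have F1 : I :|: A :\ x \subset F by rewrite subUset IF (subset_trans A'Y YF).
have F2 : x |: I \subset F by rewrite subUset IF sub1set (subsetP YF).
have := r_sub F1 F2.
have -> : (I :|: A :\ x) :|: (x |: I) = I :|: A.
  apply/setP => y; rewrite !inE; case: (boolP (y == x)) => [/eqP ->|]; rewrite ?xA ?orbT //=.
  by move=> _; case: (y \in I); case: (y \in A).
have Hi : (r I <= r ((I :|: A :\ x) :&: (x |: I)))%N.
  apply: r_mono; first by apply: subset_trans (subsetIr _ _) F2.
  by rewrite subsetI subsetUl subsetUr.
rewrite IH H // => Hs.
have Hm : (r I <= r (I :|: A))%N.
  by apply: r_mono; [rewrite subUset IF (subset_trans AY YF)|rewrite subsetUl].
lia.
Qed.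

Lemma setU1_in (x : T) (A : {set T}) : x \in A -> x |: A = A.
Proof. by move=> xA; apply/setP => y; rewrite !inE; case: (boolP (y == x)) => // /eqP ->. Qed.

Lemma extend (I0 S : {set T}) : S \subset F -> I0 \subset S -> r I0 = #|I0| ->
  exists I : {set T}, [/\ I0 \subset I, I \subset S, r I = #|I| & r S = r I].
Proof.
move=> SF I0S rI0.
pose P := fun I : {set T} => [&& I0 \subset I, I \subset S & r I == #|I|].
have P0 : P I0 by rewrite /P subxx I0S rI0 eqxx.
case: (@arg_maxnP _ _ P (fun I : {set T} => #|I|) P0) => I /and3P[I0I IS /eqP rI] Hmax.
exists I; split => //.
have IF := subset_trans IS SF.
apply: span => // x xS.
case: (boolP (x \in I)) => xI; first by rewrite setU1_in.
have xIF : x |: I \subset F by rewrite subUset IF sub1set (subsetP SF).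
have h1 := r_le xIF; rewrite cardsU1 xI in h1.
have h2 : (r I <= r (x |: I))%N by apply: r_mono => //; apply: subsetUr.
case: (eqVneq (r (x |: I)) (#|I|.+1)) => h3.
  have : P (x |: I).
    by rewrite /P h3 cardsU1 xI (subset_trans I0I (subsetUr _ _)) /= subUset sub1set xS IS add1n eqxx.
  by move/Hmax; rewrite cardsU1 xI /=; lia.
move: h1 h2 h3; rewrite rI; lia.
Qed.

Lemma bases_cap (B S : {set T}) : B \in bases F r -> S \subset F -> (#|B :&: S| <= r S)%N.
Proof.
rewrite inE => /and3P[BF /eqP cB _] SF.
have := @indep_sub (B :&: S) B BF (subsetIl _ _) (esym cB) => <-.
by apply: r_mono => //; apply: subsetIr.
Qed.

Lemma bases_card (B : {set T}) : B \in bases F r -> B \subset F /\ #|B| = r F.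
Proof. by rewrite inE => /and3P[BF /eqP -> /eqP ->]. Qed.

Lemma basis_ext (S : {set T}) : S \subset F -> exists B, B \in bases F r /\ #|B :&: S| = r S.
Proof.
move=> SF.
have rs0 : r set0 = #|(set0 : {set T})| by rewrite r0 cards0.
have [I [_ IS rI rS]] := @extend set0 S SF (sub0set _) rs0.
have IF := subset_trans IS SF.
have [J [IJ JF rJ rF]] := @extend I F (subxx _) IF rI.
have JB : J \in bases F r by rewrite inE JF rJ eqxx /= rF rJ.
exists J; split => //; apply/eqP; rewrite eqn_leq bases_cap //= rS rI.
by apply: subset_leq_card; rewrite subsetI IJ IS.
Qed.

End Matroid.

Definition posS (T : finType) (F : {set T}) (z : {ffun T -> int}) : {set T} :=
  [set i in F | 0 < z i].

Definition Aset (T : finType) (F : {set T}) (r : {set T} -> nat) (t u : nat)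
  (z : {ffun T -> int}) : Prop :=
  [/\ forall i, i \notin F -> z i = 0,
      \sum_(i in F) z i = (r F)%:Z + u%:Z - t%:Z &
      \sum_(i in posS F z) z i <= (r (posS F z))%:Z + u%:Z].

Lemma sum_in_card (R : numDomainType) (T : finType) (X S : {set T}) :
  \sum_(i in S) ((i \in X)%:R : R) = (#|X :&: S|)%:R.
Proof.
rewrite -natr_sum; congr (_%:R).
rewrite -sum1_card (big_setID X) /= [X in (_ + X)%N]big1 ?addn0.
  by rewrite setIC; apply: eq_bigr => i; rewrite inE => /andP[->].
by move=> i; rewrite !inE => /andP[/negbTE ->].
Qed.

Lemma sum_sub_le (R : numDomainType) (T : finType) (S F : {set T}) (f : T -> R) :
  S \subset F -> (forall i, 0 <= f i) -> \sum_(i in S) f i <= \sum_(i in F) f i.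
Proof.
move=> SF f0; rewrite [X in _ <= X](big_setID S) /= (setIidPr SF) lerDl.
by apply: sumr_ge0 => i _; apply: f0.
Qed.

Section Charac.
Variables (R : realFieldType) (T : finType) (F : {set T}) (r : {set T} -> nat).
Hypothesis M : is_matroid F r.

Lemma charac_fw t u z : in_QP R F (bases F r) t u z -> Aset F r t u z.
Proof.
move=> [off [lam [mu [nu [[l0 l1] [m0 m1] [n0 n1] Hz]]]]].
have key (S : {set T}) : S \subset F -> \sum_(i in S) ((z i)%:~R : R) =
    \sum_(X in bases F r) lam X * (#|X :&: S|)%:R + u%:R * \sum_(i in S) mu i
    - t%:R * \sum_(i in S) nu i.
  move=> SF; rewrite (eq_bigr _ (fun i iS => Hz i (subsetP SF i iS))).
  rewrite sumrB big_split /= -!mulr_sumr; congr (_ + _ - _).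
  rewrite exchange_big /=; apply: eq_bigr => X _.
  by rewrite -mulr_sumr sum_in_card.
split => //.
  apply/eqP; rewrite -(eqr_int R) rmorph_sum /= (key F (subxx _)) m1 n1 !mulr1.
  have -> : \sum_(X in bases F r) lam X * (#|X :&: F|)%:R = (r F)%:R.
    rewrite -[X in _ = X]mul1r -l1 mulr_suml; apply: eq_bigr => X XB.
    by have [XF cX] := bases_card XB; rewrite (setIidPl XF) cX.
  by rewrite !rmorphB rmorphD /=.
have SF : posS F z \subset F by apply/subsetP => i; rewrite inE => /andP[].
rewrite -(ler_int R) rmorph_sum /= (key _ SF) rmorphD /=.
rewrite -subr_ge0 addrAC.
set A := \sum_(X in bases F r) _.
have HA : A <= (r (posS F z))%:R.
  have -> : ((r (posS F z))%:R : R) = \sum_(X in bases F r) lam X * (r (posS F z))%:R.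
    by rewrite -mulr_suml l1 mul1r.
  apply: ler_sum => X XB.
  by apply: ler_wpM2l => //; rewrite ler_nat (bases_cap M).
have Hm : \sum_(i in posS F z) mu i <= 1 by rewrite -m1 sum_sub_le.
have Hn : 0 <= \sum_(i in posS F z) nu i by apply: sumr_ge0.
have Hu : u%:R * \sum_(i in posS F z) mu i <= u%:R.
  by rewrite -[X in _ <= X]mulr1; apply: ler_wpM2l.
have Ht : 0 <= t%:R * \sum_(i in posS F z) nu i by apply: mulr_ge0.
rewrite -!pmulrn; lra.
Qed.

Lemma charac_bw t u z : F != set0 -> Aset F r t u z -> in_QP R F (bases F r) t u z.
Proof.
move=> F0 [off sumz posle]; split=> //.
set S := posS F z.
have SF : S \subset F by apply/subsetP => i; rewrite inE => /andP[].
have [B [BB BS]] := basis_ext M SF.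
have [BF cB] := bases_card BB.
have [F00|[i0 i0F]] := set_0Vmem F; first by rewrite F00 eqxx in F0.
pose d i : int := z i - ((i \in B)%:R : int).
pose a i : int := if i \in S then d i else 0.
pose b i : int := a i - d i.
have zS i : i \in S -> 0 < z i by rewrite inE => /andP[].
have znS i : i \notin S -> z i <= 0.
  case: (boolP (i \in F)) => iF; last by rewrite off.
  by rewrite inE iF /= -leNgt.
have a0 i : 0 <= a i.
  rewrite /a /d; case: ifP => // /zS; case: (i \in B) => /=; rewrite ?natz; lia.
have b0 i : 0 <= b i.
  rewrite /b /a /d; case: ifP => [_|/negbT /znS]; first by rewrite subrr.
  case: (i \in B) => /=; rewrite ?natz; lia.
have sumA : \sum_(i in F) a i = \sum_(i in S) z i - (r S)%:Z.
  rewrite (big_setID S) /= (setIidPr SF) [X in _ + X]big1 ?addr0; last first.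
    by move=> i; rewrite inE => /andP[/negbTE iS _]; rewrite /a iS.
  rewrite (eq_bigr d); last by move=> i iS; rewrite /a iS.
  by rewrite /d sumrB sum_in_card BS natz.
set P := \sum_(i in F) a i.
have Pu : P <= u%:Z.
  by rewrite /P sumA lerBlDl.
pose c : int := u%:Z - P.
have c0 : 0 <= c by rewrite /c; lia.
have one : \sum_(i in F) ((i == i0)%:R : int) = 1.
  under eq_bigr do rewrite -in_set1.
  by rewrite sum_in_card (setIidPl _) ?cards1 // sub1set.
pose a' i : int := a i + (i == i0)%:R * c.
pose b' i : int := b i + (i == i0)%:R * c.
have a'0 i : 0 <= a' i by rewrite /a'; apply: addr_ge0 => //; case: (i == i0) => /=; lia.
have b'0 i : 0 <= b' i by rewrite /b'; apply: addr_ge0 => //; case: (i == i0) => /=; lia.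
have sumA' : \sum_(i in F) a' i = u%:Z.
  by rewrite /a' big_split /= -mulr_suml one mul1r -/P /c; lia.
have sumB' : \sum_(i in F) b' i = t%:Z.
  rewrite /b' big_split /= -mulr_suml one mul1r /b sumrB -/P /d sumrB sum_in_card.
  rewrite (setIidPl BF) cB sumz /c; lia.
have ab i : a' i - b' i = d i by rewrite /a' /b' /b; lia.
pose mu i : R := if u == 0%N then (i == i0)%:R else (a' i)%:~R / u%:R.
pose nu i : R := if t == 0%N then (i == i0)%:R else (b' i)%:~R / t%:R.
have Hmu i : i \in F -> u%:R * mu i = (a' i)%:~R.
  move=> iF; rewrite /mu; case: (eqVneq u 0%N) => [u0|u0].
    have := @psumr_eq0P _ _ (fun i => i \in F) a' (fun i _ => a'0 i).
    by rewrite sumA' u0 => /(_ erefl i iF) ->; rewrite mul0r.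
  by rewrite mulrC divfK // pnatr_eq0.
have Hnu i : i \in F -> t%:R * nu i = (b' i)%:~R.
  move=> iF; rewrite /nu; case: (eqVneq t 0%N) => [t0|t0].
    have := @psumr_eq0P _ _ (fun i => i \in F) b' (fun i _ => b'0 i).
    by rewrite sumB' t0 => /(_ erefl i iF) ->; rewrite mul0r.
  by rewrite mulrC divfK // pnatr_eq0.
exists (fun X => (X == B)%:R), mu, nu; split.
- split; first by move=> X; case: (X == B).
  rewrite (bigD1 B) //= eqxx big1 ?addr0 // => X /andP[_ /negbTE ->] //.
- split.
    move=> i; rewrite /mu; case: ifP => _; first by case: (i == i0).
    by apply: divr_ge0; rewrite ?ler0z.
  rewrite /mu; case: (eqVneq u 0%N) => [u0|u0].
    under eq_bigr do rewrite -in_set1.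
    by rewrite sum_in_card (setIidPl _) ?cards1 // sub1set.
  by rewrite -mulr_suml -rmorph_sum /= sumA' divff // pnatr_eq0.
- split.
    move=> i; rewrite /nu; case: ifP => _; first by case: (i == i0).
    by apply: divr_ge0; rewrite ?ler0z.
  rewrite /nu; case: (eqVneq t 0%N) => [t0|t0].
    under eq_bigr do rewrite -in_set1.
    by rewrite sum_in_card (setIidPl _) ?cards1 // sub1set.
  by rewrite -mulr_suml -rmorph_sum /= sumB' divff // pnatr_eq0.
move=> i iF; rewrite Hmu // Hnu //.
rewrite (bigD1 B) //= eqxx mul1r big1 ?addr0; last first.
  by move=> X /andP[_ /negbTE ->]; rewrite mul0r.
have -> : z i = (i \in B)%:R + (a' i - b' i) by rewrite ab /d; lia.
by rewrite rmorphD rmorphB /= addrA rmorph_nat.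
Qed.

End Charac.

Section Card.
Variable A : eqType.

Lemma card_is_ext (P Q : A -> Prop) n : (forall z, P z <-> Q z) -> card_is P n -> card_is Q n.
Proof. by move=> PQ [s [us Hs ss]]; exists s; split => // z; rewrite Hs. Qed.

Lemma card_is_uniq (P : A -> Prop) n m : card_is P n -> card_is P m -> n = m.
Proof.
move=> [s [us Hs <-]] [s' [us' Hs' <-]]; apply: perm_size; apply: uniq_perm => // z.
apply/idP/idP => H.
  by apply/Hs'; apply/Hs.
by apply/Hs; apply/Hs'.
Qed.

Lemma card_is_or (P Q : A -> Prop) n m : (forall z, P z -> Q z -> False) ->
  card_is P n -> card_is Q m -> card_is (fun z => P z \/ Q z) (n + m).
Proof.
move=> dis [s [us Hs <-]] [s' [us' Hs' <-]]; exists (s ++ s'); split.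
- rewrite cat_uniq us us' andbT /=; apply/hasPn => z /Hs' Qz; apply/negP => /Hs Pz.
  exact: dis Pz Qz.
- by move=> z; rewrite mem_cat; split => [/orP[/Hs|/Hs']|[/Hs|/Hs'] ->]; rewrite ?orbT; auto.
- by rewrite size_cat.
Qed.

Lemma card_is_img (P : A -> Prop) (f g : A -> A) n :
  (forall w, P w -> g (f w) = w) -> card_is P n ->
  card_is (fun z => exists w, P w /\ z = f w) n.
Proof.
move=> gf [s [us Hs <-]]; exists (map f s); split.
- rewrite map_inj_in_uniq // => x y /Hs Px /Hs Py E.
  by rewrite -(gf _ Px) E gf.
- move=> z; split => [/mapP[w /Hs Pw ->]|[w [/Hs Pw ->]]]; first by exists w.
  exact: map_f.
- by rewrite size_map.
Qed.

Lemma card_is_empty : card_is (fun _ : A => False) 0.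
Proof. by exists [::]; split => // z; split. Qed.

Lemma card_is_sum (Pk : nat -> A -> Prop) (n : nat -> nat) m :
  (forall k, (k < m)%N -> card_is (Pk k) (n k)) ->
  (forall k k' z, Pk k z -> Pk k' z -> k = k') ->
  card_is (fun z => exists k, (k < m)%N /\ Pk k z) (\sum_(k < m) n k)%N.
Proof.
move=> Hc Hd; elim: m Hc => [|m IH] Hc.
  rewrite big_ord0; apply: card_is_ext card_is_empty => z; by split => // -[k []]; rewrite ltn0.
rewrite big_ord_recr /=.
apply: (card_is_ext (P := fun z => (exists k, (k < m)%N /\ Pk k z) \/ Pk m z)).
  move=> z; split => [[[k [km Pz]]|Pz]|[k [km Pz]]].
  - by exists k; split => //; apply: ltnW.
  - by exists m.
  - case: (ltnP k m) => [kl|kg]; first by left; exists k.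
    by right; have -> : m = k by apply/eqP; rewrite eqn_leq kg -ltnS km.
apply: card_is_or.
- by move=> z [k [km Pz]] Pz'; have := Hd _ _ _ Pz Pz'; move=> E; rewrite E ltnn in km.
- by apply: IH => k km; apply: Hc; apply: ltnW.
- exact: Hc.
Qed.

End Card.

Definition zup (T : finType) (z : {ffun T -> int}) (e : T) (k : int) : {ffun T -> int} :=
  [ffun i => if i == e then k else z i].

Lemma sum_le_pos (T : finType) (G : {set T}) (w : {ffun T -> int}) :
  \sum_(i in G) w i <= \sum_(i in posS G w) w i.
Proof.
have PG : posS G w \subset G by apply/subsetP => i; rewrite inE => /andP[].
rewrite (big_setID (posS G w)) /= (setIidPr PG) gerDl.
apply: sumr_le0 => i; rewrite !inE => /andP[] /[swap] -> /=; rewrite -leNgt => //.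
Qed.

Lemma card_le_pos (T : finType) (G : {set T}) (w : {ffun T -> int}) :
  (#|posS G w|)%:Z <= \sum_(i in posS G w) w i.
Proof.
rewrite -natz -sumr_const; apply: ler_sum => i; rewrite inE => /andP[_]; lia.
Qed.

Section Decomp.
Variables (T : finType) (F : {set T}) (r : {set T} -> nat) (e : T).
Hypotheses (M : is_matroid F r) (eF : e \in F).

Lemma sum_split (z : {ffun T -> int}) :
  \sum_(i in F) z i = z e + \sum_(i in F :\ e) zup z e 0 i.
Proof.
rewrite (bigD1 e) //=; congr (_ + _).
apply: eq_big => [i|i]; first by rewrite !inE andbC.
by move=> /andP[_ /negbTE ine]; rewrite /zup ffunE ine.
Qed.

Lemma posS_le0 (z : {ffun T -> int}) : z e <= 0 ->
  posS F z = posS (F :\ e) (zup z e 0) /\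
  \sum_(i in posS F z) z i = \sum_(i in posS (F :\ e) (zup z e 0)) zup z e 0 i.
Proof.
move=> ze.
have E : posS F z = posS (F :\ e) (zup z e 0).
  apply/setP => i; rewrite !inE ffunE; case: (eqVneq i e) => [->|] //=.
  by apply/negbTE; rewrite negb_and -leNgt ze orbT.
split => //; rewrite E; apply: eq_bigr => i; rewrite !inE ffunE.
by case: (i == e).
Qed.

Lemma posS_gt0 (z : {ffun T -> int}) : 0 < z e ->
  posS F z = e |: posS (F :\ e) (zup z e 0) /\
  \sum_(i in posS F z) z i = z e + \sum_(i in posS (F :\ e) (zup z e 0)) zup z e 0 i.
Proof.
move=> ze.
have E : posS F z = e |: posS (F :\ e) (zup z e 0).
  apply/setP => i; rewrite !inE ffunE; case: (eqVneq i e) => [->|] //=.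
  by rewrite eF ze.
split => //; rewrite E big_setU1 /=; last by rewrite !inE eqxx.
congr (_ + _); apply: eq_bigr => i; rewrite !inE ffunE.
by case: (i == e).
Qed.

Lemma off_equiv (z : {ffun T -> int}) :
  (forall i, i \notin F -> z i = 0) <-> (forall i, i \notin F :\ e -> zup z e 0 i = 0).
Proof.
split => H i.
  rewrite !inE ffunE negb_and negbK; case: (eqVneq i e) => //= _; exact: H.
move=> iF; have := H i; rewrite !inE ffunE (negbTE iF) andbF.
case: (eqVneq i e) => [ie|_]; last by apply.
by rewrite ie eF in iF.
Qed.

Lemma rfacts (S0 : {set T}) : S0 \subset F :\ e ->
  [/\ (r (e |: S0) <= r S0 + r [set e])%N, (r [set e] <= r (e |: S0))%N,
      (r S0 <= r (F :\ e))%N, (r S0 <= #|S0|)%N &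
      [/\ (r (F :\ e) <= r F)%N, (r F <= r (F :\ e) + r [set e])%N &
          (r [set e] <= 1)%N]].
Proof.
move=> SF.
have FeF : F :\ e \subset F by apply: subsetDl.
have S0F := subset_trans SF FeF.
have eFs : [set e] \subset F by rewrite sub1set.
have dis (X : {set T}) : X \subset F :\ e -> [set e] :&: X = set0.
  move=> XF; apply/setP => i; rewrite !inE; case: (eqVneq i e) => //= ->.
  by apply/negP => /(subsetP XF); rewrite !inE eqxx.
split.
- by have := r_sub M eFs S0F; rewrite dis // (r0 M) addn0; lia.
- by apply: (r_mono M); [rewrite subUset eFs S0F|apply: subsetUl].
- exact: (r_mono M).
- exact: (r_le M).
split.
- exact: (r_mono M).
- by have := r_sub M eFs FeF; rewrite dis // (r0 M) addn0 setD1K //; lia.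
- by have := r_le M eFs; rewrite cards1.
Qed.

Lemma decomp t u (z : {ffun T -> int}) :
  Aset F r t u z <->
  (exists s, (s + (r F - r (F :\ e)) <= t)%N /\ Aset (F :\ e) r s u (zup z e 0) /\
     z e = s%:Z + (r F - r (F :\ e))%N%:Z - t%:Z) \/
  (exists v, (v < u + r [set e])%N /\ Aset (F :\ e) (contr_rank r e) t v (zup z e 0) /\
     z e = u%:Z + (r [set e])%:Z - v%:Z).
Proof.
set z0 := zup z e 0.
set S0 := posS (F :\ e) z0.
have S0F : S0 \subset F :\ e by apply/subsetP => i; rewrite inE => /andP[].
have [h1 h2 h3 h4 [h5 h6 h7]] := rfacts S0F.
have h8 : (r [set e] <= r F)%N by apply: (r_mono M) => //; rewrite sub1set.
have hs := sum_split z; rewrite -/z0 in hs.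
have g1 := sum_le_pos (F :\ e) z0; have g2 := card_le_pos (F :\ e) z0.
rewrite -/S0 in g1 g2.
have cF : contr_rank r e (F :\ e) = (r F - r [set e])%N by rewrite /contr_rank setD1K.
have cS : contr_rank r e S0 = (r (e |: S0) - r [set e])%N by [].
have oe := off_equiv z; rewrite -/z0 in oe.
case: (lerP (z e) 0) => ke.
- have [pE psum] := posS_le0 ke; rewrite -/z0 -/S0 in pE psum.
  split.
  + move=> [off sz pz]; left.
    have nn : 0 <= (r (F :\ e))%:Z + u%:Z - \sum_(i in F :\ e) z0 i.
      move: pz; rewrite psum pE; lia.
    pose s := absz ((r (F :\ e))%:Z + u%:Z - \sum_(i in F :\ e) z0 i)%R.
    have sE : s%:Z = (r (F :\ e))%:Z + u%:Z - \sum_(i in F :\ e) z0 i := gez0_abs nn.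
    exists s.
    split; last split.
    * suff : ((s + (r F - r (F :\ e)))%:Z <= t%:Z) by [].
      rewrite PoszD sE; move: sz; rewrite hs; lia.
    * split; first by apply/oe.
        by rewrite sE; lia.
      by move: pz; rewrite psum pE.
    * by rewrite sE; move: sz; rewrite hs; lia.
  + move=> [[s [st [[off' sz' pz'] ze]]] | [v [vu [[off' sz' pz'] ze]]]].
    * split; first by apply/oe.
        by rewrite hs sz' ze; lia.
      by rewrite psum pE.
    * by exfalso; move: ke; rewrite ze; lia.
- have [pE psum] := posS_gt0 ke; rewrite -/z0 -/S0 in pE psum.
  split.
  + move=> [off sz pz]; right.
    have nn : 0 <= u%:Z + (r [set e])%:Z - z e.
      by move: pz; rewrite psum pE; lia.
    pose s := absz (u%:Z + (r [set e])%:Z - z e)%R.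
    have sE : s%:Z = u%:Z + (r [set e])%:Z - z e := gez0_abs nn.
    exists s.
    split; last split.
    * suff : (s%:Z < (u + r [set e])%N%:Z) by [].
      by rewrite sE; lia.
    * split; first by apply/oe.
        by rewrite cF sE; move: sz; rewrite hs; lia.
      by rewrite cS sE -/S0; move: pz; rewrite psum pE; lia.
    * by rewrite sE; lia.
  + move=> [[s [st [[off' sz' pz'] ze]]] | [v [vu [[off' sz' pz'] ze]]]].
    * by exfalso; move: ke; rewrite ze; lia.
    * split; first by apply/oe.
        by move: sz'; rewrite cF hs ze; lia.
      move: pz'; rewrite psum pE cS ze -/S0; move: h2; clear; lia.
Qed.

End Decomp.

Lemma zupK (T : finType) (w : {ffun T -> int}) e k : w e = 0 -> zup (zup w e k) e 0 = w.
Proof. by move=> we; apply/ffunP => i; rewrite !ffunE; case: eqVneq => // ->. Qed.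

Lemma zup_id (T : finType) (z : {ffun T -> int}) e : zup (zup z e 0) e (z e) = z.
Proof. by apply/ffunP => i; rewrite !ffunE; case: eqVneq => // ->. Qed.

Lemma zup_e (T : finType) (w : {ffun T -> int}) e k : zup w e k e = k.
Proof. by rewrite ffunE eqxx. Qed.

Lemma piece_card (T : finType) (G : {set T}) (rr : {set T} -> nat) e s v (k : int) n :
  e \notin G -> card_is (Aset G rr s v) n ->
  card_is (fun z => Aset G rr s v (zup z e 0) /\ z e = k) n.
Proof.
move=> eG H.
have we w : Aset G rr s v w -> w e = 0 by case => off _ _; apply: off.
apply: (card_is_ext (P := fun z => exists w, Aset G rr s v w /\ z = zup w e k)).
  move=> z; split.
    by move=> [w [Aw ->]]; rewrite zup_e zupK //; apply: we.
  move=> [Az ze]; exists (zup z e 0); split => //.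
  by rewrite -ze zup_id.
apply: (@card_is_img _ _ (fun w => zup w e k) (fun z => zup z e 0) n) => // w Aw.
exact: zupK (we _ Aw).
Qed.

Lemma count_rel (T : finType) (F : {set T}) (r : {set T} -> nat) (e : T)
  (M : is_matroid F r) (eF : e \in F) (ND NC : nat -> nat -> nat) t u :
  (forall s v, card_is (Aset (F :\ e) r s v) (ND s v)) ->
  (forall s v, card_is (Aset (F :\ e) (contr_rank r e) s v) (NC s v)) ->
  card_is (Aset F r t u)
    (\sum_(s < t.+1 - (r F - r (F :\ e))) ND s u + \sum_(v < u + r [set e]) NC t v)%N.
Proof.
move=> HD HC.
have eG : e \notin F :\ e by rewrite !inE eqxx.
set dl := (r F - r (F :\ e))%N.
set la := r [set e].
have dl1 : (dl <= 1)%N.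
  have [_ _ _ _ [h5 h6 h7]] := rfacts M eF (sub0set (F :\ e)); rewrite /dl; lia.
apply: (card_is_ext (P := fun z =>
  (exists s, (s < t.+1 - dl)%N /\ (Aset (F :\ e) r s u (zup z e 0) /\ z e = s%:Z + dl%:Z - t%:Z)) \/
  (exists v, (v < u + la)%N /\ (Aset (F :\ e) (contr_rank r e) t v (zup z e 0) /\
     z e = u%:Z + la%:Z - v%:Z)))).
  move=> z; rewrite (decomp M eF) -/dl -/la.
  split => -[[x [xl rest]]|[x [xl rest]]].
  - by left; exists x; split => //; move: xl dl1; lia.
  - by right; exists x.
  - by left; exists x; split => //; move: xl dl1; lia.
  - by right; exists x.
apply: card_is_or.
- move=> z [s [sl [_ ze]]] [v [vl [_ ze']]].
  have : z e <= 0 by rewrite ze; move: sl dl1; lia.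
  by rewrite ze'; move: vl; lia.
- apply: (@card_is_sum _ (fun s z => Aset (F :\ e) r s u (zup z e 0) /\
     z e = s%:Z + dl%:Z - t%:Z) (fun s => ND s u) (t.+1 - dl)).
    by move=> s _; apply: piece_card.
  by move=> k k' z [_ ->] [_]; lia.
- apply: (@card_is_sum _ (fun v z => Aset (F :\ e) (contr_rank r e) t v (zup z e 0) /\
     z e = u%:Z + la%:Z - v%:Z) (fun v => NC t v) (u + la)).
    by move=> v _; apply: piece_card.
  by move=> k k' z [_ ->] [_]; lia.
Qed.

Definition natof (q : rat) : nat := absz (numq q).

Lemma natofK n : natof (n%:R) = n.
Proof. by rewrite /natof (_ : n%:R = (n%:Z)%:~R) // numq_int. Qed.

Lemma Aset_ext (T : finType) (G : {set T}) (r1 r2 : {set T} -> nat) t u z :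
  (forall X : {set T}, X \subset G -> r1 X = r2 X) -> Aset G r1 t u z <-> Aset G r2 t u z.
Proof.
move=> E.
have PG : posS G z \subset G by apply/subsetP => i; rewrite inE => /andP[].
by rewrite /Aset !E.
Qed.

Lemma matroid_del (T : finType) (F : {set T}) (r : {set T} -> nat) e :
  is_matroid F r -> is_matroid (F :\ e) r.
Proof.
move=> M; have FF : F :\ e \subset F by apply: subsetDl.
split.
- by move=> X XF; apply: (r_le M); apply: subset_trans FF.
- by move=> X Y YF XY; apply: (r_mono M) => //; apply: subset_trans FF.
- by move=> X Y XF YF; apply: (r_sub M); apply: subset_trans FF.
Qed.

Lemma matroid_contr (T : finType) (F : {set T}) (r : {set T} -> nat) e :
  is_matroid F r -> e \in F -> is_matroid (F :\ e) (contr_rank r e).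
Proof.
move=> M eF.
have eFs : [set e] \subset F by rewrite sub1set.
have sF (X : {set T}) : X \subset F :\ e -> e |: X \subset F.
  by move=> XF; rewrite subUset eFs (subset_trans XF (subsetDl _ _)).
have low (X : {set T}) : X \subset F :\ e -> (r [set e] <= r (e |: X))%N.
  by move=> XF; apply: (r_mono M (sF _ XF)); apply: subsetUl.
rewrite /contr_rank; split.
- move=> X XF; have [h1 _ _ h4 _] := rfacts M eF XF; lia.
- move=> X Y YF XY; have := low _ YF.
  have XF := subset_trans XY YF; have := low _ XF.
  have : (r (e |: X) <= r (e |: Y))%N by apply: (r_mono M (sF _ YF)); apply: setUS.
  lia.
- move=> X Y XF YF.
  have XYF : X :|: Y \subset F :\ e by rewrite subUset XF YF.
  have XIF : X :&: Y \subset F :\ e by apply: subset_trans (subsetIl _ _) XF.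
  have := low _ XF; have := low _ YF; have := low _ XYF; have := low _ XIF.
  have := r_sub M (sF _ XF) (sF _ YF).
  rewrite -setUUr -setUIr. lia.
Qed.

Lemma Qp_eq d c d' c' : (forall t u, Ev d c t u = Ev d' c' t u) -> Qprime d c = Qprime d' c'.
Proof.
move=> H; rewrite -Qp_trunc -(Qp_trunc d').
apply: rep_unique; [exact: bnd_trunc|exact: bnd_trunc|] => t u.
by rewrite !Ev_trunc.
Qed.

Lemma Qp0 c : Qprime 0 c = 0.
Proof. by rewrite /Qprime big_ord0. Qed.

Lemma sum_last (f : nat -> rat) n : \sum_(s < n) f s = \sum_(s < n.+1) f s - f n.
Proof. by rewrite big_ord_recr /= addrK. Qed.

Unset Implicit Arguments.

Theorem mainTheorem4 (R : realFieldType) (T : finType) (F : {set T})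
    (r : {set T} -> nat) (e : T)
    (dM dD dC : nat) (cM cD cC : nat -> nat -> rat) :
  is_matroid F r -> (2 <= #|F|)%N -> e \in F ->
  Q_expansion R F r dM cM ->
  Q_expansion R (F :\ e) r dD cD ->
  Q_expansion R (F :\ e) (contr_rank r e) dC cC ->
  (~ is_loop r e -> ~ is_coloop F r e ->
     Qprime dM cM = varx * Qprime dD cD + vary * Qprime dC cC) /\
  (is_loop r e \/ is_coloop F r e ->
     Qprime dM cM = (varx + vary - 1) * Qprime dC cC /\
     Qprime dM cM = (varx + vary - 1) * Qprime dD cD).
Proof.
move=> M F2 eF QM QD QC.
have Fe0 : F :\ e != set0.
  by rewrite -card_gt0; move: F2; rewrite (cardsD1 e F) eF; lia.
have F0 : F != set0 by apply/set0Pn; exists e.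
have MD := matroid_del e M.
have MC := matroid_contr M eF.
pose ND s v := natof (Ev dD cD s v).
pose NC s v := natof (Ev dC cC s v).
have cDD s v : card_is (Aset (F :\ e) r s v) (ND s v) /\ (ND s v)%:R = Ev dD cD s v.
  have [n [Hn En]] := QD s v; rewrite /ND /Ev -En natofK; split => //.
  apply: card_is_ext Hn => z; split; [exact: charac_fw MD _ _ _|exact: charac_bw MD _ _ _ Fe0].
have cCC s v : card_is (Aset (F :\ e) (contr_rank r e) s v) (NC s v) /\ (NC s v)%:R = Ev dC cC s v.
  have [n [Hn En]] := QC s v; rewrite /NC /Ev -En natofK; split => //.
  apply: card_is_ext Hn => z; split; [exact: charac_fw MC _ _ _|exact: charac_bw MC _ _ _ Fe0].
have EM t u : Ev dM cM t u = \sum_(s < t.+1 - (r F - r (F :\ e))) Ev dD cD s u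
                            + \sum_(v < u + r [set e]) Ev dC cC t v.
  have [n [Hn En]] := QM t u.
  have HA : card_is (Aset F r t u) n.
    apply: card_is_ext Hn => z; split; [exact: charac_fw M _ _ _|exact: charac_bw M _ _ _ F0].
  have HB := count_rel M eF t u (fun s v => (cDD s v).1) (fun s v => (cCC s v).1).
  rewrite /Ev -En (card_is_uniq HA HB) natrD !natr_sum; congr (_ + _).
    by apply: eq_bigr => s _; rewrite (cDD s u).2.
  by apply: eq_bigr => v _; rewrite (cCC t v).2.
have [_ _ _ _ [h5 h6 h7]] := rfacts M eF (sub0set (F :\ e)).
have contr_eq : (forall X : {set T}, X \subset F :\ e -> contr_rank r e X = r X) ->
    forall s v, Ev dD cD s v = Ev dC cC s v.
  move=> CE s v; rewrite -(cDD s v).2 -(cCC s v).2; congr (_%:R).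
  apply: card_is_uniq (cDD s v).1 _.
  apply: card_is_ext (cCC s v).1 => z; apply: Aset_ext => X XF; exact: CE.
split.
  move=> nl ncl.
  have l1 : r [set e] = 1%N by move: nl h7; rewrite /is_loop; lia.
  have d0 : (r F - r (F :\ e))%N = 0%N by move: ncl h5; rewrite /is_coloop; lia.
  rewrite -[RHS]subr0 -(Qp0 cM).
  apply: (@final_alg (Ev dM cM) (Ev dD cD) (Ev dC cC) (fun _ _ => 0)) => //.
    by move=> t u; rewrite /Ev big_ord0.
  by move=> t u; rewrite EM d0 l1 subn0 addn1 subr0.
have mono (X : {set T}) : X \subset F :\ e -> (r X <= r (e |: X))%N.
  move=> XF; apply: (r_mono M); last exact: subsetUr.
  by rewrite subUset sub1set eF (subset_trans XF (subsetDl _ _)).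
move=> [lp|clp].
  rewrite /is_loop in lp.
  have d0 : (r F - r (F :\ e))%N = 0%N by move: h6; rewrite lp; lia.
  have EDC : forall s v, Ev dD cD s v = Ev dC cC s v.
    apply: contr_eq => X XF; rewrite /contr_rank lp subn0.
    have [h1 _ _ _ _] := rfacts M eF XF; have := mono X XF; move: h1; rewrite lp; lia.
  have QDC : Qprime dD cD = Qprime dC cC by apply: Qp_eq.
  have E : Qprime dM cM = varx * Qprime dC cC + vary * Qprime dC cC - Qprime dC cC.
    apply: (@final_alg (Ev dM cM) (Ev dC cC) (Ev dC cC) (Ev dC cC)) => // t u.
    rewrite EM d0 lp subn0 addn0 (sum_last (fun v => Ev dC cC t v)) addrA; congr (_ + _ + _).
    by apply: eq_bigr => s _; rewrite EDC.
  by rewrite -QDC E QDC; split; ring.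
rewrite /is_coloop in clp.
have l1 : r [set e] = 1%N by move: clp h6 h7; lia.
have d1 : (r F - r (F :\ e))%N = 1%N by move: clp h6; rewrite l1; lia.
have EDC : forall s v, Ev dD cD s v = Ev dC cC s v.
  apply: contr_eq => X XF; rewrite /contr_rank l1.
  have [h1 _ _ _ _] := rfacts M eF XF.
  have eXF : e |: X \subset F by rewrite subUset sub1set eF (subset_trans XF (subsetDl _ _)).
  have := r_sub M eXF (subsetDl F [set e]).
  have -> : (e |: X) :|: (F :\ e) = F.
    apply/setP => i; rewrite !inE; case: (eqVneq i e) => [->|] //=.
    by move=> _; case: (boolP (i \in X)) => //= /(subsetP XF); rewrite !inE => /andP[_ ->].
  have -> : (e |: X) :&: (F :\ e) = X.
    apply/setP => i; rewrite !inE; case: (eqVneq i e) => [->|] //=.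
      by apply/esym/negP => /(subsetP XF); rewrite !inE eqxx.
    by move=> _; case: (boolP (i \in X)) => //= /(subsetP XF); rewrite !inE => /andP[_ ->].
  move: h1 clp; rewrite l1; lia.
have QDC : Qprime dD cD = Qprime dC cC by apply: Qp_eq.
have E : Qprime dM cM = varx * Qprime dD cD + vary * Qprime dC cC - Qprime dD cD.
  apply: (@final_alg (Ev dM cM) (Ev dD cD) (Ev dC cC) (Ev dD cD)) => // t u.
  rewrite EM d1 l1 subn1 /= addn1 (sum_last (fun s => Ev dD cD s u)).
  by rewrite addrAC.
by rewrite E QDC; split; ring.
Qed.
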